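(* Let $(x_0,y_0)\in\{(\tfrac{\pi}{4},-\tfrac{3\pi}{4}),\,(\tfrac{3\pi}{4},-\tfrac{\pi}{4})\}$ and let $U\subset\mathbb{R}^2$ be an open neighborhood of $(x_0,y_0)$. Let $\mathcal{A},\mathcal{B}:U\to[-1,1]$ be functions that are differentiable at $(x_0,y_0)$ and satisfy $\mathcal{A}(x_0,y_0)=\mathcal{B}(x_0,y_0)=0$ and $\nabla(\mathcal{A}-\mathcal{B})(x_0,y_0)\neq 0$ (i.e. $(x_0,y_0)$ is not a critical point of $\mathcal{A}-\mathcal{B}$). For $(x,y)\in\mathbb{R}^2$ put $C(x,y)=-\cos(x-y)$. Then there exist real numbers $\mu\neq 0$, $\nu\neq 0$ and $\epsilon_0>0$ such that for every $\epsilon\in(0,\epsilon_0)$, at the point $(x,y)=(x_0+\mu\epsilon,\,y_0+\nu\epsilon)$ at least one of the two inequalities $$|C(x,y)+\mathcal{A}(x,y)|+|\mathcal{B}(x,y)-C(x,y)|\le 2,\qquad |C(x,y)-\mathcal{A}(x,y)|+|\mathcal{B}(x,y)+C(x,y)|\le 2$$ is false.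
   Context: Physical interpretation (not needed for the mathematics): $(x,y)=(\theta_{\bm a},\theta_{\bm b})$ parametrizes quadruplets of measurement directions in a plane with $\theta_{\bm a'}=-\theta_{\bm a}$, $\theta_{\bm b'}=-\theta_{\bm b}$; $C$ is the quantum correlation $\langle a,b\rangle=\langle a',b'\rangle=-\cos(\theta_{\bm a}-\theta_{\bm b})$, $\mathcal{A}=\langle a,a'\rangle$, $\mathcal{B}=\langle b,b'\rangle$, and the two displayed inequalities are the ''Boole inequalities'' $|\langle a,b\rangle\pm\langle a,a'\rangle|+|\langle b',b\rangle\mp\langle b',a'\rangle|\le 2$, which hold for correlations of $\{-1,1\}$-valued sequences. The conclusion thus says that these assumptions on $\mathcal{A},\mathcal{B}$ are incompatible with the Boole inequalities. *)

(* Defs.v *)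
From Stdlib Require Import Reals.
Open Scope R_scope.

Definition open2 (U : R -> R -> Prop) : Prop :=
  forall x y, U x y -> exists r, 0 < r /\
    forall x' y', Rabs (x' - x) < r -> Rabs (y' - y) < r -> U x' y'.

Definition has_grad_at (U : R -> R -> Prop) (f : R -> R -> R) (x0 y0 a b : R) : Prop :=
  forall eps, 0 < eps -> exists delta, 0 < delta /\
    forall x y, U x y -> Rabs (x - x0) < delta -> Rabs (y - y0) < delta ->
      Rabs (f x y - f x0 y0 - (a * (x - x0) + b * (y - y0)))
        <= eps * (Rabs (x - x0) + Rabs (y - y0)).

Definition Ccorr (x y : R) : R := - cos (x - y).

(* Main.v *)
Require Import Defs.
From Stdlib Require Import Reals Lra.
Open Scope R_scope.
Lemma sin_abs_le u : Rabs (sin u) <= Rabs u.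
Proof.
  assert (H: forall v, 0 < v -> Rabs (sin v) <= v).
  { intros v Hv. destruct (Rle_lt_dec 1 v).
    - pose proof (SIN_bound v). unfold Rabs; destruct Rcase_abs; lra.
    - pose proof (sin_lt_x v Hv). assert (0 < sin v) by (apply sin_gt_0; pose proof PI2_1; lra).
      rewrite Rabs_right; lra. }
  destruct (Rtotal_order u 0) as [h|[h|h]].
  - rewrite <- Rabs_Ropp, <- sin_neg, (Rabs_left u h). apply H; lra.
  - subst; rewrite sin_0, Rabs_R0; lra.
  - rewrite (Rabs_right u) by lra. apply H; lra.
Qed.
Lemma cos_bnd t : 1 - cos t <= t * t / 2.
Proof.
  replace t with (2 * (t/2)) at 1 by field. rewrite cos_2a_sin.
  pose proof (sin_abs_le (t/2)).
  assert (sin (t/2) * sin (t/2) <= (t/2)*(t/2)).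
  { assert (Rabs (sin (t/2)) * Rabs (sin (t/2)) <= Rabs (t/2) * Rabs (t/2))
      by (apply Rmult_le_compat; try apply Rabs_pos; auto).
    rewrite <- !Rabs_mult in H0. rewrite !Rabs_right in H0 by (apply Rle_ge, Rle_0_sqr). exact H0. }
  all: lra.
Qed.

Theorem claim2 (x0 y0 : R) (U : R -> R -> Prop) (A B : R -> R -> R)
  (aA bA aB bB : R) :
  ((x0 = PI / 4 /\ y0 = - (3 * PI / 4)) \/ (x0 = 3 * PI / 4 /\ y0 = - (PI / 4))) ->
  open2 U -> U x0 y0 ->
  (forall x y, U x y -> -1 <= A x y <= 1 /\ -1 <= B x y <= 1) ->
  has_grad_at U A x0 y0 aA bA ->
  has_grad_at U B x0 y0 aB bB ->
  A x0 y0 = 0 -> B x0 y0 = 0 ->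
  (aA - aB <> 0 \/ bA - bB <> 0) ->
  exists mu nu eps0, mu <> 0 /\ nu <> 0 /\ 0 < eps0 /\
    forall eps, 0 < eps < eps0 ->
      let x := x0 + mu * eps in
      let y := y0 + nu * eps in
      U x y /\
      (~ (Rabs (Ccorr x y + A x y) + Rabs (B x y - Ccorr x y) <= 2) \/
       ~ (Rabs (Ccorr x y - A x y) + Rabs (B x y + Ccorr x y) <= 2)).
Proof.
  intros Hpt Hop HU _ HgA HgB HA0 HB0 Hg.
  assert (Hd : x0 - y0 = PI) by (destruct Hpt as [[-> ->]|[-> ->]]; field).
  set (g1 := aA - aB). set (g2 := bA - bB).
  assert (Hnu : exists nu, (nu = 1 \/ nu = 2) /\ g1 + nu * g2 <> 0).
  { destruct (Req_dec (g1 + g2) 0) as [h|h].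
    - exists 2. split; [right; reflexivity|]. unfold g1, g2 in *. lra.
    - exists 1. split; [left; reflexivity|]. lra. }
  destruct Hnu as [nu [Hnu HD]].
  set (D := g1 + nu * g2) in HD.
  assert (HDp : 0 < Rabs D) by (apply Rabs_pos_lt; exact HD).
  destruct (Hop x0 y0 HU) as [r [Hr HrU]].
  destruct (HgA (Rabs D / 12)) as [dA [HdA HA]]; [lra|].
  destruct (HgB (Rabs D / 12)) as [dB [HdB HB]]; [lra|].
  exists 1, nu, (Rmin (Rmin (Rmin r dA) dB / 3) (Rabs D / 4)).
  assert (Hm1 : Rmin (Rmin r dA) dB <= r /\ Rmin (Rmin r dA) dB <= dA /\ Rmin (Rmin r dA) dB <= dB /\ 0 < Rmin (Rmin r dA) dB).
  { unfold Rmin; repeat destruct Rle_dec; lra. }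
  split; [lra|]. split; [destruct Hnu; lra|]. split.
  { unfold Rmin at 1; destruct Rle_dec; lra. }
  intros eps Heps x y.
  assert (He1 : eps < Rmin (Rmin r dA) dB / 3 /\ eps < Rabs D / 4).
  { revert Heps; unfold Rmin at 1; destruct Rle_dec; lra. }
  assert (Hx : Rabs (x - x0) = eps) by (unfold x; replace (x0 + 1 * eps - x0) with eps by ring; apply Rabs_right; lra).
  assert (Hy : Rabs (y - y0) = nu * eps) by (unfold y; replace (y0 + nu * eps - y0) with (nu * eps) by ring; apply Rabs_right; destruct Hnu as [->| ->]; lra).
  assert (Hxr : Rabs (x - x0) < Rmin (Rmin r dA) dB) by lra.
  assert (Hyr : Rabs (y - y0) < Rmin (Rmin r dA) dB) by (rewrite Hy; destruct Hnu as [->| ->]; lra).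
  assert (HUxy : U x y) by (apply HrU; lra).
  split; [exact HUxy|].
  specialize (HA x y HUxy ltac:(lra) ltac:(lra)).
  specialize (HB x y HUxy ltac:(lra) ltac:(lra)).
  rewrite Hx, Hy, HA0 in HA. rewrite Hx, Hy, HB0 in HB.
  replace (x - x0) with eps in HA, HB by (unfold x; ring).
  replace (y - y0) with (nu * eps) in HA, HB by (unfold y; ring).
  assert (HC : Ccorr x y = cos ((1 - nu) * eps)).
  { unfold Ccorr. replace (x - y) with ((1 - nu) * eps + PI) by (unfold x, y; lra).
    rewrite neg_cos; ring. }
  pose proof (cos_bnd ((1 - nu) * eps)) as Hcb.
  assert (Hk : (1 - nu) * eps * ((1 - nu) * eps) / 2 <= eps * eps / 2)
    by (destruct Hnu as [->| ->]; nra).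
  assert (Hdiff : Rabs (A x y - B x y - D * eps) <= Rabs D * eps / 2).
  { replace (A x y - B x y - D * eps) with
      ((A x y - 0 - (aA * eps + bA * (nu * eps))) - (B x y - 0 - (aB * eps + bB * (nu * eps))))
      by (unfold D, g1, g2; ring).
    eapply Rle_trans; [apply Rabs_triang_inv2 || apply Rabs_triang|].
    rewrite Rabs_Ropp. destruct Hnu as [->| ->]; nra. }
  assert (HAB : Rabs D * eps / 2 <= Rabs (A x y - B x y)).
  { assert (Rabs (D * eps) = Rabs D * eps) by (rewrite Rabs_mult, (Rabs_right eps); lra).
    pose proof (Rabs_triang_inv (D * eps) (D * eps - (A x y - B x y))).
    replace (D * eps - (D * eps - (A x y - B x y))) with (A x y - B x y) in H0 by ring.
    rewrite <- Rabs_Ropp in Hdiff.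
    replace (- (A x y - B x y - D * eps)) with (D * eps - (A x y - B x y)) in Hdiff by ring.
    lra. }
  assert (Hee : eps * eps < Rabs D * eps / 2) by nra.
  rewrite HC. set (c := cos ((1 - nu) * eps)) in *.
  pose proof (Rle_abs (c + A x y)). pose proof (Rle_abs (c - A x y)).
  pose proof (Rle_abs (B x y + c)).
  pose proof (Rabs_Ropp (B x y - c)). pose proof (Rle_abs (- (B x y - c))).
  destruct (Rcase_abs (A x y - B x y)) as [h|h];
    [rewrite (Rabs_left (A x y - B x y)) in HAB by lra; right | rewrite (Rabs_right (A x y - B x y)) in HAB by lra; left].
  all: intro; lra.
Qed.
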